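(* Let $a$ be a positive integer with $\sigma(a)\neq 2a$, and let $b,c$ be coprime integers with $c>0$ and $\dfrac{b}{c}=\dfrac{a}{2a-\sigma(a)}$. Let $\alpha,\beta,x,y$ be positive integers and put $$p=\alpha x-1,\quad q=\beta y-1,\quad r=\beta x-1,\quad s=\alpha y-1.$$ Suppose $p,q,r,s$ are primes with $p\neq q$, $r\neq s$, none of which divides $a$. If $$\bigl(c\alpha\beta x-b(\alpha+\beta)\bigr)\bigl(c\alpha\beta y-b(\alpha+\beta)\bigr)=b^2(\alpha+\beta)^2-2bc\alpha\beta,$$ then $apq$ and $ars$ are amicable numbers.
   Context: For a positive integer $N$, $\sigma(N)$ denotes the sum of all positive divisors of $N$. Positive integers $M,N$ are amicable if $\sigma(M)-M=N$ and $\sigma(N)-N=M$. *)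

(* Defs.v *)
From mathcomp Require Import all_boot all_order all_algebra.
Set Implicit Arguments. Unset Strict Implicit. Unset Printing Implicit Defensive.

Definition sigma (N : nat) : nat := \sum_(d <- divisors N) d.

Definition amicable (M N : nat) : Prop :=
  0 < M /\ 0 < N /\ sigma M - M = N /\ sigma N - N = M.

(* Main.v *)
Require Import Defs.
From mathcomp Require Import all_boot all_order all_algebra.
From mathcomp Require Import ring lra zify.
Import Order.TTheory GRing.Theory Num.Theory.

Lemma sigma_mulp m p : 0 < m -> prime p -> ~~ (p %| m) -> sigma (m * p) = sigma m * p.+1.
Proof.
move=> m0 pp pm; have p0 := prime_gt0 pp.
rewrite /sigma.
have inj : injective (muln p) by move=> u v /eqP; rewrite eqn_pmul2l // => /eqP.
have Hperm : perm_eq (divisors (m * p)) (divisors m ++ map (muln p) (divisors m)).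
  apply: uniq_perm.
  - exact: divisors_uniq.
  - rewrite cat_uniq divisors_uniq (map_inj_uniq inj) divisors_uniq /= andbT.
    apply/hasPn => z /mapP [d dd ->]; rewrite -dvdn_divisors //; apply/negP => h.
    by move: pm; rewrite (dvdn_trans (dvdn_mulr d (dvdnn p)) h).
  - move=> d; rewrite mem_cat -!dvdn_divisors ?muln_gt0 ?m0 ?p0 //. apply/idP/orP.
    + move=> hd; case: (boolP (p %| d)) => pd.
        right; apply/mapP; exists (d %/ p); last by rewrite mulnC divnK.
        by rewrite -dvdn_divisors // -(dvdn_pmul2r p0) divnK.
      left; have cop : coprime d p by rewrite coprime_sym prime_coprime.
      by rewrite -(Gauss_dvdl _ cop).
    + case=> [h| /mapP [e he ->]]; first exact: dvdn_mulr.
      by rewrite mulnC dvdn_pmul2r // dvdn_divisors.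
rewrite (perm_big _ Hperm) big_cat /= big_map -big_distrr /=.
lia.
Qed.

Local Open Scope ring_scope.
Lemma key : forall (a : nat) (b c : int) (alpha beta x y : nat),
  (0 < a)%N ->
  sigma a <> (2 * a)%N ->
  coprimez b c ->
  0 < c ->
  (b%:~R / c%:~R : rat) = (a%:R / ((2 * a)%:R - (sigma a)%:R)) ->
  (0 < alpha)%N -> (0 < beta)%N -> (0 < x)%N -> (0 < y)%N ->
  (c * (alpha * beta * x)%:R - b * (alpha + beta)%:R) *
  (c * (alpha * beta * y)%:R - b * (alpha + beta)%:R)
    = b ^+ 2 * ((alpha + beta)%:R) ^+ 2 - 2 * b * c * (alpha * beta)%:R ->
  ((2 * a)%:R - (sigma a)%:R) * (alpha * beta * x * y)%:R = (a%:R * ((alpha+beta)*(x+y))%:R - 2 * a%:R :> int).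
Proof.
move=> a b c alpha beta x y a0 sa cop c0 H a0' b0' x0 y0 E2.
set D : int := (2 * a)%:R - (sigma a)%:R.
have D0 : D != 0.
  by rewrite /D subr_eq0 eqr_nat; apply/eqP => h; apply: sa.
have E1 : b * D = a%:R * c.
  have cr : (c%:~R : rat) != 0 by rewrite intr_eq0 gt_eqF.
  have Dr : (D%:~R : rat) != 0 by rewrite intr_eq0.
  have : (D%:~R : rat) = (2 * a)%:R - (sigma a)%:R by rewrite /D rmorphB /= !natz.
  move=> hD; rewrite -hD in H.
  move/eqP: H; rewrite eqr_div // => /eqP h.
  apply: (@intr_inj rat); by rewrite !rmorphM /= natz.
have K0 : c * (alpha * beta)%:R * (c * (alpha * beta * x * y)%:R - b * (alpha+beta)%:R * (x+y)%:R + 2 * b) = 0.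
  have -> : c * (alpha * beta)%:R * (c * (alpha * beta * x * y)%:R - b * (alpha+beta)%:R * (x+y)%:R + 2 * b) =
    (c * (alpha * beta * x)%:R - b * (alpha + beta)%:R) *
  (c * (alpha * beta * y)%:R - b * (alpha + beta)%:R) - (b ^+ 2 * ((alpha + beta)%:R) ^+ 2 - 2 * b * c * (alpha * beta)%:R)
    by rewrite !natrM !natrD; ring.
  by rewrite E2 subrr.
have cP : c * (alpha * beta)%:R != 0 by rewrite mulf_eq0 negb_or gt_eqF // pnatr_eq0 -lt0n muln_gt0 a0' b0'.
move: K0 => /eqP; rewrite mulf_eq0 (negbTE cP) /= => /eqP K.
apply: (mulfI (x := c)); first by rewrite gt_eqF.
have -> : c * (D * (alpha * beta * x * y)%:R) = D * (c * (alpha * beta * x * y)%:R - b * (alpha+beta)%:R * (x+y)%:R + 2 * b) + (b * D) * ((alpha+beta)%:R * (x+y)%:R - 2) by ring.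
rewrite K E1 !natrM !natrD; ring.
Qed.


Theorem mainTheorem8 (a : nat) (b c : int) (alpha beta x y : nat) :
  (0 < a)%N ->
  sigma a <> (2 * a)%N ->
  coprimez b c ->
  0 < c ->
  (b%:~R / c%:~R : rat) = (a%:R / ((2 * a)%:R - (sigma a)%:R)) ->
  (0 < alpha)%N -> (0 < beta)%N -> (0 < x)%N -> (0 < y)%N ->
  let p := (alpha * x - 1)%N in
  let q := (beta * y - 1)%N in
  let r := (beta * x - 1)%N in
  let s := (alpha * y - 1)%N in
  prime p -> prime q -> prime r -> prime s ->
  p <> q -> r <> s ->
  ~~ (p %| a)%N -> ~~ (q %| a)%N -> ~~ (r %| a)%N -> ~~ (s %| a)%N ->
  (c * (alpha * beta * x)%:R - b * (alpha + beta)%:R) *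
  (c * (alpha * beta * y)%:R - b * (alpha + beta)%:R)
    = b ^+ 2 * ((alpha + beta)%:R) ^+ 2 - 2 * b * c * (alpha * beta)%:R ->
  amicable (a * p * q) (a * r * s).
Proof.
move=> a0 sa cop c0 H al0 be0 x0 y0 p q r s pp pq pr ps pnq rns pa qa ra sa' E2.
have Key := key a b c alpha beta x y a0 sa cop c0 H al0 be0 x0 y0 E2.
have px : (alpha * x = p.+1)%N by rewrite /p subn1 prednK // muln_gt0 al0 x0.
have qy : (beta * y = q.+1)%N by rewrite /q subn1 prednK // muln_gt0 be0 y0.
have rx : (beta * x = r.+1)%N by rewrite /r subn1 prednK // muln_gt0 be0 x0.
have sy : (alpha * y = s.+1)%N by rewrite /s subn1 prednK // muln_gt0 al0 y0.
clearbody p q r s.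
have hPQ : (alpha * beta * x * y = p.+1 * q.+1)%N by rewrite -px -qy; ring.
have hRS : (r.+1 * s.+1 = p.+1 * q.+1)%N by rewrite -px -qy -rx -sy; ring.
have hS : ((alpha + beta) * (x + y) = p.+1 + q.+1 + r.+1 + s.+1)%N by rewrite -px -qy -rx -sy; ring.
rewrite hPQ hS in Key.
have ndiv (u v : nat) : prime u -> prime v -> u <> v -> ~~ (u %| a)%N -> ~~ (u %| a * v)%N.
  move=> pu pv uv ua; rewrite Euclid_dvdM // negb_or ua /= dvdn_prime2 //; exact/eqP.
have sig1 : sigma (a * p * q) = (sigma a * p.+1 * q.+1)%N.
  rewrite sigma_mulp ?sigma_mulp ?muln_gt0 ?a0 ?prime_gt0 //.
  by apply: ndiv => // h; apply: pnq.
have sig2 : sigma (a * r * s) = (sigma a * r.+1 * s.+1)%N.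
  rewrite sigma_mulp ?sigma_mulp ?muln_gt0 ?a0 ?prime_gt0 //.
  by apply: ndiv => // h; apply: rns.
have Hn : (sigma a * (p.+1 * q.+1) = a * (p * q + r * s))%N.
  apply/eqP; rewrite -(@eqr_nat int) -subr_eq0; apply/eqP.
  have hRSz : (r.+1%:R * s.+1%:R : int) = p.+1%:R * q.+1%:R by rewrite -!natrM hRS.
  move: Key hRSz; rewrite !natrM !natrD => Key hRSz.
  rewrite ?natrM ?natrD.
  transitivity (- (((2 * a%:R) - (sigma a)%:R) * (p.+1%:R * q.+1%:R) - (a%:R * (p.+1%:R + q.+1%:R + r.+1%:R + s.+1%:R) - 2 * a%:R))
     + a%:R * (p.+1%:R * q.+1%:R - r.+1%:R * s.+1%:R) : int).
    ring.
  by rewrite Key hRSz !subrr oppr0 mulr0 addr0.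
split; first by rewrite !muln_gt0 a0 !prime_gt0.
split; first by rewrite !muln_gt0 a0 !prime_gt0.
split.
  by rewrite sig1 -mulnA Hn mulnDr !mulnA addKn.
by rewrite sig2 -mulnA hRS Hn mulnDr !mulnA addnK.
Qed.
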